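(* Let $G$ be a graph, $k\ge1$, and $S,T$ independent sets of $G$ of size $k$. Let $\mathcal{F}$ be the family obtained from an independence covering family for $(G,k)$ by removing all members of size less than $k$ and adding $S$ and $T$. Let $\mathcal{G}$ be the graph with vertex set $\mathcal{F}$ in which distinct $I,I'\in\mathcal{F}$ are adjacent iff $|I\cap I'|\ge k-1$. If there is a token jumping reconfiguration sequence $S=I_0,I_1,\dots,I_m=T$ in $G$, then there is a path from $S$ to $T$ in $\mathcal{G}$.
   Context: An independence covering family for $(G,k)$ is a family of independent sets of $G$ such that every independent set of $G$ of size at most $k$ is a subset of some member. A token jumping reconfiguration sequence from $S$ to $T$ is a finite sequence $S=I_0,\dots,I_m=T$ of independent sets of $G$ of size $k$ with each $I_{j+1}=(I_j\setminus\{u\})\cup\{v\}$ for some $u\in I_j$, $v\in V(G)\setminus I_j$. *)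

(* Defs.v *)
From mathcomp Require Import all_boot.
Set Implicit Arguments. Unset Strict Implicit. Unset Printing Implicit Defensive.

Section Defs.
Variables (V : finType) (e : rel V).

Definition independent (I : {set V}) : bool :=
  [forall x in I, forall y in I, ~~ e x y].

Definition indep_covering_family (k : nat) (F : {set {set V}}) : Prop :=
  (forall I, I \in F -> independent I) /\
  (forall J, independent J -> #|J| <= k -> exists2 I, I \in F & J \subset I).

Definition tj_step (I J : {set V}) : bool :=
  [exists u in I, exists v in ~: I, J == (I :\ u) :|: [set v]].

(* s = [:: I_1; ...; I_m] such that S = I_0, I_1, ..., I_m = T is a token
   jumping reconfiguration sequence of independent sets of size k. *)
Definition tj_sequence (k : nat) (S T : {set V}) (s : seq {set V}) : bool :=
  all (fun I => independent I && (#|I| == k)) (S :: s)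
  && path tj_step S s && (last S s == T).

Definition trimmed_family (k : nat) (F : {set {set V}}) (S T : {set V})
  : {set {set V}} :=
  [set I in F | k <= #|I|] :|: [set S; T].

Definition fam_adj (k : nat) (Fam : {set {set V}}) : rel {set V} :=
  fun I J => [&& I \in Fam, J \in Fam, I != J & k.-1 <= #|I :&: J|].

End Defs.

(* Main.v *)
Require Import Defs.
From mathcomp Require Import all_boot.

Section Aux.
Variables (V : finType) (k : nat) (Fam : {set {set V}}).

Definition reach (X Y : {set V}) : Prop :=
  exists p : seq {set V}, path (fam_adj k Fam) X p /\ last X p = Y.

Lemma reach_trans X Y Z : reach X Y -> reach Y Z -> reach X Z.
Proof.
move=> [p [hp hl]] [q [hq hl']]; exists (p ++ q).
by rewrite cat_path last_cat hl hp hq hl'.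
Qed.

Lemma reach_step X Y : X \in Fam -> Y \in Fam -> k.-1 <= #|X :&: Y| -> reach X Y.
Proof.
move=> hX hY hk; case: (eqVneq X Y) => [->|ne].
  by exists [::].
by exists [:: Y]; rewrite /= /fam_adj hX hY ne hk.
Qed.
End Aux.

Theorem lemma7p2 (V : finType) (e : rel V)
  (e_sym : symmetric e) (e_irr : irreflexive e)
  (k : nat) (hk : 1 <= k) (S T : {set V})
  (hS : independent e S) (hSk : #|S| = k)
  (hT : independent e T) (hTk : #|T| = k)
  (F : {set {set V}}) (hF : indep_covering_family e k F) :
  (exists s : seq {set V}, tj_sequence e k S T s) ->
  exists p : seq {set V},
    path (fam_adj k (trimmed_family k F S T)) S p /\ last S p = T.
Proof.
set Fam := trimmed_family k F S T.
have SF : S \in Fam by rewrite !inE eqxx orbT.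
have TF : T \in Fam by rewrite !inE eqxx !orbT.
have key : forall (s : seq {set V}) I C X,
    all (fun I => independent e I && (#|I| == k)) (I :: s) ->
    path (tj_step (V:=V)) I s -> C \in Fam -> I \subset C ->
    X \in Fam -> last I s \subset X -> @reach V k Fam C X.
  elim=> [|J s IH] I C X /=.
    move=> /andP[/andP[_ /eqP hI] _] _ hC hIC hX hIX.
    apply: reach_step => //; rewrite -hI.
    by apply: leq_trans (leq_pred _) _; apply: subset_leq_card; rewrite subsetI hIC hIX.
  move=> /andP[/andP[_ /eqP hI] /andP[/andP[hJi /eqP hJk] hall]].
  move=> /andP[hst hp] hC hIC hX hJX.
  have [hF1 hF2] := hF.
  have [C' hC'F hJC'] := hF2 J hJi (eq_leq hJk).
  have hC'Fam : C' \in Fam.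
    by rewrite !inE hC'F /= -hJk (subset_leq_card hJC').
  apply: (@reach_trans V k Fam C C' X); last first.
    by apply: (IH J) => //; rewrite /= hJi hJk eqxx.
  apply: reach_step => //.
  move: hst => /existsP[u /andP[hu /existsP[v /andP[_ /eqP hJ]]]].
  have h1 : k.-1 = #|I :\ u| by rewrite -hI (cardsD1 u I) hu.
  rewrite h1; apply: subset_leq_card; rewrite subsetI; apply/andP; split.
    exact: subset_trans (subsetDl _ _) hIC.
  apply: subset_trans hJC'; rewrite hJ; exact: subsetUl.
move=> [s /andP[/andP[hall hp] /eqP hl]].
apply: (key s S S T hall hp SF (subxx _) TF); by rewrite hl.
Qed.
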